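(* Let $B$ be a locally compact Hausdorff space, let $(X,r)$ be a $B$-space, let $(X',r')$ be a $B$-space with $X'$ Hausdorff and $r'$ proper, let $f\colon X\to X'$ be a $B$-map, and let $f'\colon\beta_BX\to X'$ be the unique continuous map with $f'\circ i=f$. Then $r'\circ f'=\beta_Br$.
   Context: A $B$-space is a space $Z$ with continuous $r\colon Z\to B$; a $B$-map is a continuous map commuting with the anchor maps. For a $B$-space $(X,r)$, $H_X\subseteq\mathrm{C_b}(X)$ is the closed linear span of products $g\cdot(h\circ r)$, $g\in\mathrm{C_b}(X)$, $h\in\mathrm C_0(B)$; $\beta_BX$ is the spectrum of the commutative C*-algebra $H_X$; $i\colon X\to\beta_BX$ sends $x$ to evaluation at $x$; $\beta_Br\colon\beta_BX\to B$ is the unique continuous map with $\beta_Br\circ i=r$ (it exists and is proper). The map $f'$ exists and is unique. *)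

(* Defs.v *)
From HB Require Import structures.
From mathcomp Require Import all_boot all_order all_algebra.
From mathcomp Require Import all_classical all_reals all_analysis.
From mathcomp Require Import complex.
Import numFieldTopology.Exports numFieldNormedType.Exports.
Import GRing.Theory Num.Theory.

Set Implicit Arguments.
Unset Strict Implicit.
Unset Printing Implicit Defensive.

Local Open Scope ring_scope.
Local Open Scope classical_set_scope.

Definition Cplx (R : realType) : numClosedFieldType := R[i].

Section BetaB.
Variable R : realType.
Local Notation C := (Cplx R).

Definition proper_map (S T : topologicalType) (f : S -> T) : Prop :=
  continuous f /\ forall K : set T, compact K -> compact (f @^-1` K).

Definition Cb (X : topologicalType) (g : X -> C) : Prop :=
  continuous g /\ exists M : R, forall x, `|g x| <= (M%:C)%C.

Definition C0 (B : topologicalType) (h : B -> C) : Prop :=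
  continuous h /\
  forall eps : R, 0 < eps -> compact [set b | (eps%:C)%C <= `|h b|].

Definition in_H (X B : topologicalType) (r : X -> B) (phi : X -> C) : Prop :=
  Cb phi /\
  forall eps : R, 0 < eps ->
    exists (n : nat) (c : nat -> C) (g : nat -> X -> C) (h : nat -> B -> C),
      (forall k, (k < n)%N -> Cb (g k) /\ C0 (h k)) /\
      forall x, `|phi x - \sum_(k < n) c k * (g k x * h k (r x))| <= (eps%:C)%C.

(* A functional is represented as a map on all of
   X -> C, normalised to vanish outside H_X, so that it is determined by its
   restriction to H_X. *)
Definition is_character (X B : topologicalType) (r : X -> B)
    (chi : {ptws (X -> C) -> C}) : Prop :=
  [/\ forall phi, ~ in_H r phi -> chi phi = 0,
      forall phi psi, in_H r phi -> in_H r psi ->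
        chi (phi \+ psi) = chi phi + chi psi,
      forall (a : C) phi, in_H r phi -> chi (fun x => a * phi x) = a * chi phi,
      forall phi psi, in_H r phi -> in_H r psi ->
        chi (phi \* psi) = chi phi * chi psi
    & exists phi, in_H r phi /\ chi phi != 0].

(* beta_B X: the spectrum of H_X with the weak-* topology, i.e. the subspace
   topology induced by the topology of pointwise convergence. *)
Definition betaB (X B : topologicalType) (r : X -> B) : topologicalType :=
  set_type (@is_character X B r).

(* is_i chi x  <->  chi = i x, i.e. chi is evaluation at x on H_X. *)
Definition is_i (X B : topologicalType) (r : X -> B) (chi : betaB r) (x : X)
  : Prop := forall phi, in_H r phi -> set_val chi phi = phi x.

End BetaB.

(* Main.v *)
Require Import Defs.
From HB Require Import structures.
From mathcomp Require Import all_boot all_order all_algebra.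
From mathcomp Require Import all_classical all_reals all_analysis.
From mathcomp Require Import complex.
Import numFieldTopology.Exports numFieldNormedType.Exports.
Local Open Scope classical_set_scope.
From mathcomp Require Import ring lra.

Module PropHelpers.
Import Order.TTheory GRing.Theory Num.Theory.
Local Open Scope ring_scope.
Section S.
Context {R : realType}.
Local Notation C := (Cplx R).
Definition nr (z : C) : R := complex.Re (`|z| : R[i]%C).
Lemma normE (z : C) : `|z| = (nr z)%:C%C.
Proof. rewrite /nr normc_def //=. Qed.
Lemma nr_ge0 z : 0 <= nr z.
Proof. have := normr_ge0 z. by rewrite normE -(lecR (0:R)). Qed.
Lemma nrD z w : nr (z + w) <= nr z + nr w.
Proof. have := ler_normD z w. by rewrite !normE -rmorphD lecR. Qed.
Lemma nrM z w : nr (z * w) = nr z * nr w.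
Proof. have := normrM z w. rewrite !normE -rmorphM. exact: complexI. Qed.
Lemma nrN z : nr (- z) = nr z.
Proof. by rewrite /nr normrN. Qed.
Lemma nrB z w : nr (z - w) = nr (w - z).
Proof. by rewrite /nr distrC. Qed.
Lemma nr0 : nr 0 = 0.
Proof. by rewrite /nr normr0. Qed.
Lemma nr1 : nr 1 = 1.
Proof. by rewrite /nr normr1. Qed.
Lemma nr_eq0 z : nr z = 0 -> z = 0.
Proof. move=> h; apply/normr0_eq0; by rewrite normE h. Qed.
Lemma nrR (a : R) : nr (a%:C%C) = `|a|.
Proof. rewrite /nr normc_def /=. rewrite expr0n /= addr0 sqrtr_sqr //. Qed.
Lemma le_normC (z : C) M : (`|z| <= M%:C%C) = (nr z <= M).
Proof. by rewrite normE lecR. Qed.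
Lemma lt_normC (z : C) M : (`|z| < M%:C%C) = (nr z < M).
Proof. by rewrite normE ltcR. Qed.
Lemma mul_conj (z : C) : z * z^* = ((nr z) ^+ 2)%:C%C.
Proof. by rewrite -normCK normE -rmorphXn. Qed.
Lemma nr_conj z : nr (z^*) = nr z.
Proof. by rewrite /nr norm_conjC. Qed.

Lemma conj_cont : continuous (fun z : C => z^*).
Proof.
move=> z. apply/(@cvgrPdist_lt _ _ _ (nbhs z) (nbhs_filter z)) => e e0.
have := @cvgr_dist_lt _ _ _ (nbhs z) (nbhs_filter z) id z cvg_id e e0.
by apply: filterS => w; rewrite /= -rmorphB norm_conjC.
Qed.

Section Top.
Variable T : topologicalType.
Implicit Types phi psi : T -> C.
Definition bnd phi M := forall x, nr (phi x) <= M.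
Lemma CbP phi : Cb phi <-> continuous phi /\ exists M, 0 <= M /\ bnd phi M.
Proof.
split=> [[c [M hM]]|[c [M [M0 hM]]]]; split => //.
  exists `|M|; split => // x; have := hM x; rewrite le_normC => h.
  exact: le_trans h (ler_norm _).
by exists M => x; rewrite le_normC.
Qed.
Lemma Cb_add phi psi : Cb phi -> Cb psi -> Cb (phi \+ psi).
Proof.
move=> /CbP[c1 [M1 [M10 b1]]] /CbP[c2 [M2 [M20 b2]]]; apply/CbP; split.
  by move=> x; apply: continuousD; [exact: c1|exact: c2].
exists (M1 + M2); split; first exact: addr_ge0.
move=> x /=; apply: le_trans (nrD _ _) _; exact: lerD.
Qed.
Lemma Cb_mul phi psi : Cb phi -> Cb psi -> Cb (phi \* psi).
Proof.
move=> /CbP[c1 [M1 [M10 b1]]] /CbP[c2 [M2 [M20 b2]]]; apply/CbP; split.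
  by move=> x; apply: continuousM; [exact: c1|exact: c2].
exists (M1 * M2); split; first exact: mulr_ge0.
move=> x /=; rewrite nrM; apply: ler_pM => //; exact: nr_ge0.
Qed.
Lemma Cb_cst (a : C) : Cb (fun _ : T => a).
Proof.
apply/CbP; split; first by move=> x; exact: cvg_cst.
by exists (nr a); split; [exact: nr_ge0|].
Qed.
Lemma Cb_scale (a : C) phi : Cb phi -> Cb (fun x => a * phi x).
Proof. move=> h; exact (Cb_mul _ _ (Cb_cst a) h). Qed.
Lemma Cb_conj phi : Cb phi -> Cb (fun x => (phi x)^*).
Proof.
move=> /CbP[c1 [M1 [M10 b1]]]; apply/CbP; split.
  move=> x; apply: continuous_comp; [exact: c1| exact: conj_cont].
by exists M1; split => // x; rewrite nr_conj.
Qed.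
End Top.
Lemma ge_normC (z : C) M : (M%:C%C <= `|z|) = (M <= nr z).
Proof. by rewrite normE lecR. Qed.

Lemma closed_ge_norm (e : R) : closed [set z : C | e%:C%C <= `|z|].
Proof.
have -> : [set z : C | e%:C%C <= `|z|] = ~` ball (0 : C) (e%:C%C).
  apply/funext => z /=; apply/propext; rewrite /ball /= sub0r normrN.
  rewrite ge_normC lt_normC; split; [move=> h1 h2|move/negP; rewrite -leNgt //].
  by move: (le_lt_trans h1 h2); rewrite ltxx.
exact/open_closedC/ball_open.
Qed.

Section B0.
Variable B : topologicalType.
Implicit Types h : B -> C.
Lemma closed_C0set h (e : R) : continuous h -> closed [set b | e%:C%C <= `|h b|].
Proof.
move=> ch; have := proj1 (continuous_closedP h) ch _ (closed_ge_norm e).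
by [].
Qed.
Lemma C0_conj h : C0 h -> C0 (fun b => (h b)^*).
Proof.
move=> [ch hc]; split.
  move=> x; apply: continuous_comp; [exact: ch| exact: conj_cont].
move=> e e0; have -> : [set b | e%:C%C <= `|(h b)^*|] = [set b | e%:C%C <= `|h b|].
  by apply/funext => b /=; rewrite norm_conjC.
exact: hc.
Qed.
Lemma C0_mul h h' : C0 h -> C0 h' -> C0 (h \* h').
Proof.
move=> [ch hc] [ch' hc']; have cm : continuous (h \* h').
  by move=> x; apply: continuousM; [exact: ch|exact: ch'].
split => // e e0.
have K1 := compactU (hc e e0) (hc' 1 ltr01).
apply: (subclosed_compact _ K1); first exact: closed_C0set.
move=> b /=; rewrite !ge_normC nrM => hb.
case: (lerP e (nr (h b))) => h1; [by left|right].
rewrite leNgt; apply/negP => h2.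
have : nr (h b) * nr (h' b) < e * 1.
  apply: ltr_pM => //; [exact: nr_ge0|exact: nr_ge0].
by rewrite mulr1 ltNge hb.
Qed.
End B0.
Section HX.
Variables (X B : topologicalType) (r : X -> B).
Implicit Types phi psi : X -> C.

Definition isA psi : Prop := exists (I : finType) (c : I -> C) (g : I -> X -> C)
  (h : I -> B -> C), (forall i, Cb (g i) /\ C0 (h i)) /\
  forall x, psi x = \sum_(i : I) c i * (g i x * h i (r x)).

Lemma isA_add psi1 psi2 : isA psi1 -> isA psi2 -> isA (psi1 \+ psi2).
Proof.
move=> [I [c [g [h [H1 E1]]]]] [J [c' [g' [h' [H2 E2]]]]].
exists (I + J)%type.
exists (fun s => match s with inl i => c i | inr j => c' j end).
exists (fun s => match s with inl i => g i | inr j => g' j end).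
exists (fun s => match s with inl i => h i | inr j => h' j end).
split; first by case.
by move=> x; rewrite big_sumType /= E1 E2.
Qed.

Lemma isA_mul psi1 psi2 : isA psi1 -> isA psi2 -> isA (psi1 \* psi2).
Proof.
move=> [I [c [g [h [H1 E1]]]]] [J [c' [g' [h' [H2 E2]]]]].
exists (I * J)%type.
exists (fun p => c p.1 * c' p.2).
exists (fun p => g p.1 \* g' p.2).
exists (fun p => h p.1 \* h' p.2).
split.
  move=> [i j] /=; have [? ?] := H1 i; have [? ?] := H2 j.
  by split; [exact: Cb_mul|exact: C0_mul].
move=> x; rewrite /= E1 E2 big_distrl /=.
rewrite (eq_bigr (fun i => \sum_(j : J) (c i * (g i x * h i (r x))) * (c' j * (g' j x * h' j (r x))))); last first.
  by move=> i _; rewrite big_distrr.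
rewrite pair_big /=; apply: eq_bigr => p _.
by rewrite mulrACA !mulrA -!mulrA (mulrCA (h p.1 (r x))) !mulrA.
Qed.

Lemma isA_scale (a : C) psi : isA psi -> isA (fun x => a * psi x).
Proof.
move=> [I [c [g [h [H1 E1]]]]]; exists I, (fun i => a * c i), g, h; split => //.
by move=> x; rewrite E1 big_distrr /=; apply: eq_bigr => i _; rewrite mulrA.
Qed.

Lemma isA_conj psi : isA psi -> isA (fun x => (psi x)^*).
Proof.
move=> [I [c [g [h [H1 E1]]]]].
exists I, (fun i => (c i)^*), (fun i x => (g i x)^*), (fun i b => (h i b)^*).
split.
  by move=> i; have [? ?] := H1 i; split; [exact: Cb_conj|exact: C0_conj].
by move=> x; rewrite E1 rmorph_sum; apply: eq_bigr => i _; rewrite !rmorphM.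
Qed.

Lemma isA_0 : isA (fun _ => 0).
Proof.
exists void, (fun _ => 0), (fun _ _ => 0), (fun _ _ => 0); split; first by case.
by move=> x; rewrite big_pred0 //; case.
Qed.

Definition apx phi := forall eps : R, 0 < eps ->
  exists psi, isA psi /\ forall x, nr (phi x - psi x) <= eps.

Lemma in_HP phi : in_H r phi <-> Cb phi /\ apx phi.
Proof.
split=> [[cb ap]|[cb ap]]; split => // e e0.
  have [n [c [g [h [H1 H2]]]]] := ap e e0.
  exists (fun x => \sum_(k < n) c k * (g k x * h k (r x))); split; last first.
    by move=> x; rewrite -le_normC.
  exists 'I_n, (fun k : 'I_n => c k), (fun k : 'I_n => g k), (fun k : 'I_n => h k); split => //.
  by move=> k; apply: H1.
have [psi [[I [c [g [h [H1 E1]]]]] H2]] := ap e e0.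
pose ins k : option 'I_#|I| := insub k.
exists #|I|.
exists (fun k => if ins k is Some o then c (enum_val o) else 0).
exists (fun k => if ins k is Some o then g (enum_val o) else (fun _ => 0)).
exists (fun k => if ins k is Some o then h (enum_val o) else (fun _ => 0)).
split.
  by move=> k kn; rewrite /ins insubT /=; apply: H1.
move=> x; rewrite le_normC; apply: le_trans (H2 x); rewrite E1.
rewrite le_eqVlt; apply/orP; left; apply/eqP.
congr (nr (_ - _)); rewrite [RHS](big_enum_val (A := predT)).
by apply: eq_bigr => k _; rewrite /ins valK.
Qed.
Lemma H_lim phi : Cb phi ->
  (forall e : R, 0 < e -> exists psi, in_H r psi /\ forall x, nr (phi x - psi x) <= e) ->
  in_H r phi.
Proof.
move=> cb ap; apply/in_HP; split => // e e0.
have e20 : 0 < e / 2 by rewrite divr_gt0.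
have [psi [/in_HP [_ apsi] H]] := ap _ e20.
have [P [AP HP]] := apsi _ e20; exists P; split => // x.
have -> : phi x - P x = (phi x - psi x) + (psi x - P x) by rewrite addrA subrK.
apply: le_trans (nrD _ _) _; rewrite (splitr e); exact: lerD.
Qed.

Lemma H_add phi psi : in_H r phi -> in_H r psi -> in_H r (phi \+ psi).
Proof.
move=> /in_HP [c1 a1] /in_HP [c2 a2]; apply/in_HP; split; first exact: Cb_add.
move=> e e0; have e20 : 0 < e / 2 by rewrite divr_gt0.
have [P [AP HP]] := a1 _ e20; have [Q [AQ HQ]] := a2 _ e20.
exists (P \+ Q); split; first exact: isA_add.
move=> x /=; rewrite opprD addrACA.
apply: le_trans (nrD _ _) _; rewrite (splitr e); exact: lerD.
Qed.

Lemma H_scale (a : C) phi : in_H r phi -> in_H r (fun x => a * phi x).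
Proof.
move=> /in_HP [c1 a1]; apply/in_HP; split; first exact: Cb_scale.
move=> e e0; have na0 : 0 < nr a + 1 by apply: ltr_wpDl; [exact: nr_ge0|].
have e20 : 0 < e / (nr a + 1) by rewrite divr_gt0.
have [P [AP HP]] := a1 _ e20.
exists (fun x => a * P x); split; first exact: isA_scale.
move=> x; rewrite -mulrBr nrM.
apply: le_trans (ler_wpM2l (nr_ge0 _) (HP x)) _.
by rewrite mulrCA ger_pMr // ler_pdivrMr // mul1r lerDl.
Qed.

Lemma H_conj phi : in_H r phi -> in_H r (fun x => (phi x)^*).
Proof.
move=> /in_HP [c1 a1]; apply/in_HP; split; first exact: Cb_conj.
move=> e e0; have [P [AP HP]] := a1 _ e0.
exists (fun x => (P x)^*); split; first exact: isA_conj.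
by move=> x; rewrite -rmorphB nr_conj.
Qed.

Lemma H_0 : in_H r (fun _ : X => (0 : C)).
Proof.
apply/in_HP; split; first exact: Cb_cst.
move=> e e0; exists (fun _ => 0); split; first exact: isA_0.
by move=> x; rewrite subrr nr0 ltW.
Qed.

Lemma H_mul phi psi : in_H r phi -> in_H r psi -> in_H r (phi \* psi).
Proof.
move=> /in_HP [c1 a1] /in_HP [c2 a2]; apply/in_HP; split; first exact: Cb_mul.
have /CbP [_ [M1 [M10 b1]]] := c1; have /CbP [_ [M2 [M20 b2]]] := c2.
move=> e e0; have M0 : 0 < M1 + M2 + 1 by rewrite ltr_wpDl // addr_ge0.
pose e' := Num.min 1 (e / (M1 + M2 + 1)).
have e'0 : 0 < e' by rewrite lt_min ltr01 divr_gt0.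
have e'1 : e' <= 1 by rewrite ge_min lexx.
have e'2 : e' * (M1 + M2 + 1) <= e by rewrite -ler_pdivlMr // ge_min lexx orbT.
have [P [AP HP]] := a1 _ e'0; have [Q [AQ HQ]] := a2 _ e'0.
exists (P \* Q); split; first exact: isA_mul.
move=> x /=.
have -> : phi x * psi x - P x * Q x = phi x * (psi x - Q x) + (phi x - P x) * Q x.
  by rewrite mulrBr mulrBl addrA subrK.
apply: le_trans (nrD _ _) _; rewrite !nrM.
have nQ : nr (Q x) <= M2 + 1.
  have -> : Q x = psi x - (psi x - Q x) by rewrite opprB addrC subrK.
  by apply: le_trans (nrD _ _) _; rewrite nrN; apply: lerD; [exact: b2|exact: le_trans (HQ x) e'1].
apply: le_trans e'2; rewrite -addrA mulrDr [e' * M1]mulrC.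
apply: lerD; apply: ler_pM => //; exact: nr_ge0.
Qed.

End HX.
Arguments H_lim {X B r phi}.
Arguments H_add {X B r phi psi}.
Arguments H_mul {X B r phi psi}.
Arguments H_scale {X B r} a {phi}.
Arguments H_conj {X B r phi}.
Arguments H_0 {X B} r.
Lemma pow_small (q e : R) : 0 <= q -> q < 1 -> 0 < e -> exists n, q ^+ n <= e.
Proof.
move=> q0 q1 e0.
have hq : `|q| < 1 by rewrite ger0_norm.
have := @cvgr_dist_lt _ _ _ _ _ (GRing.exp q) 0 (cvg_expr hq) e e0.
move=> H; have [n hn] := filter_ex (H _); exists n.
by move: hn; rewrite sub0r normrN ger0_norm ?exprn_ge0 // => /ltW.
Qed.
Section Char.
Variables (X B : topologicalType) (r : X -> B) (chi : {ptws (X -> C) -> C}).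
Hypothesis hchi : is_character r chi.

Lemma chi_add {phi psi} : in_H r phi -> in_H r psi -> chi (phi \+ psi) = chi phi + chi psi.
Proof. by case: hchi => _ h _ _ _; apply: h. Qed.
Lemma chi_scale (a : C) {phi} : in_H r phi -> chi (fun x => a * phi x) = a * chi phi.
Proof. by case: hchi => _ _ h _ _; apply: h. Qed.
Lemma chi_mul {phi psi} : in_H r phi -> in_H r psi -> chi (phi \* psi) = chi phi * chi psi.
Proof. by case: hchi => _ _ _ h _; apply: h. Qed.
Lemma chi_out phi : ~ in_H r phi -> chi phi = 0.
Proof. by case: hchi => h _ _ _ _; apply: h. Qed.
Lemma chi_0 : chi (fun _ => 0) = 0.
Proof.
have := chi_add (H_0 r) (H_0 r).
have -> : (fun _ : X => (0 : C)) \+ (fun _ => 0) = (fun _ => 0).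
  by apply/funext => x /=; rewrite addr0.
by move=> h; apply: (@addrI _ (chi (fun _ => 0))); rewrite addr0 -h.
Qed.

Lemma neumann a : in_H r a -> chi a = 1 -> (forall x, nr (a x) <= 2^-1) -> False.
Proof.
move=> Ha ca1 ba.
have h2 : (2^-1 : R) < 1 by rewrite invf_lt1 // ltr1n.
have ne x : 1 - a x != 0.
  apply/negP; rewrite subr_eq0 => /eqP h; have := ba x; rewrite -h nr1.
  by rewrite leNgt h2.
pose c x := a x * (1 - a x)^-1.
have key x : c x = a x + a x * c x.
  rewrite /c; have := ne x; move: (a x) => z nz; field.
  exact: nz.
have bc x : nr (c x) <= 1.
  have := nrD (a x) (a x * c x); rewrite -key nrM => h.
  have := ba x; have := nr_ge0 (c x); have := nr_ge0 (a x); nra.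
have cbc : Cb c.
  apply/CbP; split; last by exists 1; split.
  have /in_HP [/CbP [ca _] _] := Ha.
  move=> x; apply: (@continuousM _ _ a (fun x => (1 - a x)^-1)); first exact: ca.
  apply: (@continuousV _ _ (fun x => 1 - a x)); first exact: ne.
  have hB := @continuousB _ _ _ (fun _ => (1 : C)) a x (@cst_continuous _ _ (1 : C) x) (ca x); exact hB.
pose fix s n := if n is n'.+1 then a \+ (a \* s n') else a.
have Hs n : in_H r (s n).
  elim: n => [|n IH] //=; apply: H_add => //; exact: H_mul.
have es n x : nr (c x - s n x) <= (2^-1) ^+ n.+1.
  elim: n => [|n IH] /=.
    rewrite expr1; have -> : c x - a x = a x * c x by rewrite {1}key addrC addKr.
    rewrite nrM -[X in _ <= X]mulr1; apply: ler_pM => //; exact: nr_ge0.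
  have -> : c x - (a x + a x * s n x) = a x * (c x - s n x).
    by rewrite {1}key mulrBr opprD addrACA subrr add0r.
  rewrite nrM exprS; apply: ler_pM => //; exact: nr_ge0.
have Hc : in_H r c.
  apply: H_lim => // e e0; have h0 : (0:R) <= 2^-1 by rewrite invr_ge0 ler0n.
  have [n hn] := pow_small _ _ h0 h2 e0.
  exists (s n); split => // x; apply: le_trans (es n x) _; apply: le_trans hn.
  by rewrite exprS ler_piMl // ?exprn_ge0 // ltW.
have fc : c = a \+ (a \* c) by apply/funext => x; exact: key.
have := chi_add Ha (H_mul Ha Hc); rewrite -fc chi_mul // ca1 mul1r.
move=> h; have : chi c - chi c = 1 + chi c - chi c by rewrite -h.
rewrite subrr addrK => /eqP; rewrite eq_sym.
by rewrite oner_eq0.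
Qed.
End Char.
End S.
Arguments H_lim {R X B r phi}.
Arguments H_add {R X B r phi psi}.
Arguments H_mul {R X B r phi psi}.
Arguments H_scale {R X B r} a {phi}.
Arguments H_conj {R X B r phi}.
Arguments H_0 {R X B} r.
Arguments chi_add {R X B r chi} hchi {phi psi}.
Arguments chi_mul {R X B r chi} hchi {phi psi}.
Arguments chi_scale {R X B r chi} hchi a {phi}.
Arguments chi_out {R X B r chi} hchi {phi}.
Arguments chi_0 {R X B r chi} hchi.
Arguments neumann {R X B r chi} hchi {a}.

Section D.
Context {R : realType}.
Local Notation C := (Cplx R).
Variables (X B : topologicalType) (r : X -> B) (chi : {ptws (X -> C) -> C}).
Hypothesis hchi : is_character r chi.

Lemma density (n : nat) (s : nat -> X -> C) (eps : R) : 0 < eps ->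
  (forall k, (k < n)%N -> in_H r (s k)) ->
  exists x, (exists phi0 : X -> C, in_H r phi0 /\ phi0 x != 0) /\
    forall k, (k < n)%N -> nr (s k x - chi (s k)) < eps.
Proof.
move=> eps0 Hs.
have [phi0 [Hphi0 nz0]] : exists phi0 : X -> C, in_H r phi0 /\ chi phi0 != 0.
  by case: hchi.
have [u [Hu cu]] : exists u : X -> C, in_H r u /\ chi u = 1.
  exists (fun x => (chi phi0)^-1 * phi0 x); split; first exact: H_scale.
  by rewrite (chi_scale hchi _ Hphi0) mulVf.
have [d [Hd [cd dE]]] : exists d : nat -> X -> C,
    (forall k, (k < n)%N -> in_H r (d k)) /\ (forall k, (k < n)%N -> chi (d k) = 0)
    /\ forall k x, d k x = u x * (s k x - chi (s k)).
  exists (fun k => (u \* s k) \+ (fun x => (- chi (s k)) * u x)); split; last split.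
  - by move=> k kn; apply: H_add; [apply: H_mul => //; exact: Hs| exact: H_scale].
  - move=> k kn; have H1 := H_mul Hu (Hs k kn); have H2 := H_scale (- chi (s k)) Hu.
    rewrite (chi_add hchi H1 H2) (chi_mul hchi Hu (Hs k kn)) (chi_scale hchi _ Hu) cu.
    by rewrite mul1r mulr1 addrC addNr.
  - by move=> k x /=; ring.
have [e [He [ce eE]]] : exists e : X -> C, in_H r e /\ chi e = 0 /\
    forall x, e x = u x * (1 - u x).
  exists (u \+ (fun x => -1 * (u \* u) x)); split; last split.
  - by apply: H_add => //; apply: H_scale; exact: H_mul.
  - have H1 := H_mul Hu Hu; have H2 := H_scale (-1) H1.
    rewrite (chi_add hchi Hu H2) (chi_scale hchi _ H1) (chi_mul hchi Hu Hu) cu.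
    by rewrite mulr1 mulN1r subrr.
  - by move=> x /=; ring.
have Gm m : (m <= n)%N -> exists g : X -> C, in_H r g /\ chi g = 0 /\
    exists gr : X -> R, (forall x, g x = (gr x)%:C%C) /\ (forall x, 0 <= gr x) /\
    (forall x, nr (e x) ^+ 2 <= gr x) /\
    (forall k x, (k < m)%N -> nr (d k x) ^+ 2 <= gr x).
  elim: m => [_|m IH mn].
    have Hc := H_conj He.
    exists (e \* (fun x => (e x)^*)); split; first exact: H_mul.
    split; first by rewrite (chi_mul hchi He Hc) ce mul0r.
    exists (fun x => nr (e x) ^+ 2); split; first by move=> x /=; rewrite mul_conj.
    split; first by move=> x; exact: exprn_ge0 (nr_ge0 _).
    by split => // k x.
  have mn' : (m < n)%N by [].
  have [g [Hg [cg [gr [gE [gr0 [gre grd]]]]]]] := IH (ltnW mn').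
  have Hdm := Hd m mn'; have Hc := H_conj Hdm; have Hm := H_mul Hdm Hc.
  exists (g \+ (d m \* (fun x => (d m x)^*))); split; first exact: H_add.
  split; first by rewrite (chi_add hchi Hg Hm) (chi_mul hchi Hdm Hc) cg cd // !mul0r addr0.
  exists (fun x => gr x + nr (d m x) ^+ 2); split.
    by move=> x /=; rewrite gE mul_conj rmorphD.
  have dpos x : 0 <= nr (d m x) ^+ 2 by exact: exprn_ge0 (nr_ge0 _).
  split; first by move=> x; apply: addr_ge0.
  split; first by move=> x; apply: le_trans (gre x) _; rewrite lerDl.
  move=> k x; rewrite ltnS leq_eqVlt => /orP [/eqP -> | km].
    by rewrite lerDr.
  by apply: le_trans (grd k x km) _; rewrite lerDl.
have [g [Hg [cg [gr [gE [gr0 [gre grd]]]]]]] := Gm n (leqnn n).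
have /in_HP [/CbP [_ [Mu [Mu0 bu]]] _] := Hu.
have /in_HP [/CbP [_ [Mg [Mg0 bg]]] _] := Hg.
have grM x : gr x <= Mg by have := bg x; rewrite gE nrR ger0_norm.
pose M := Mg + 1.
have M1 : 1 <= M by rewrite lerDr.
have M0 : 0 < M by apply: lt_le_trans M1.
have grM' x : gr x < M by apply: le_lt_trans (grM x) _; rewrite ltrDl.
pose rho := Num.min (4^-1) (eps / 4).
have rho0 : 0 < rho by rewrite lt_min invr_gt0 ltr0n divr_gt0.
have rho1 : rho <= 4^-1 by rewrite ge_min lexx.
have rho2 : rho <= eps / 4 by rewrite ge_min lexx orbT.
apply: contrapT => NH.
have small x : gr x < rho * rho -> nr (u x) <= 2^-1.
  move=> hx; case: (lerP (2^-1) (nr (u x))) => h; last exact: ltW.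
  exfalso; apply: NH; exists x; split.
    exists u; split => //; apply/negP => /eqP u0.
    by move: h; rewrite u0 nr0 leNgt invr_gt0 ltr0n.
  move=> k kn; have := grd k x kn; rewrite dE nrM => hd.
  have h1 := nr_ge0 (s k x - chi (s k)); have h2 := nr_ge0 (u x).
  have h3 : (0:R) < 2^-1 by rewrite invr_gt0 ltr0n.
  have h4 : (1 : R) <= 2 * nr (u x).
    by rewrite -ler_pdivrMl ?ltr0n // mulr1.
  move: h1 h2 h4 hd; set t := nr (s k x - chi (s k)); set v := nr (u x) => h1 h2 h4 hd.
  have p0 : 0 <= v * t by apply: mulr_ge0.
  have hvt : v * t < rho.
    move: p0 hd; set p := v * t => p0 hd; nra.
  have h6 : t <= 2 * (v * t) by nra.
  have h7 : eps / 4 < eps by rewrite ltr_pdivrMr ?ltr0n // ltr_pMr // ltr1n.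
  lra.
have Aj j : exists a : X -> C, in_H r a /\ chi a = 1 /\
    forall x, a x = u x * ((1 - gr x / M) ^+ j)%:C%C.
  elim: j => [|j [a [Ha [ca aE]]]].
    by exists u; do 2!split => //; move=> x; rewrite expr0 mulr1.
  have Hga := H_mul Hg Ha; have H2 := H_scale (- (M^-1)%:C%C) Hga.
  exists (a \+ (fun x => (- (M^-1)%:C%C) * (g \* a) x)); split; first exact: H_add.
  split; first by rewrite (chi_add hchi Ha H2) (chi_scale hchi _ Hga) (chi_mul hchi Hg Ha) cg mul0r mulr0 addr0.
  move=> x /=; rewrite aE gE.
  have -> : ((1 - gr x / M) ^+ j.+1)%:C%C = ((1 - gr x / M) ^+ j)%:C%C * (1 - (gr x)%:C%C * (M^-1)%:C%C).
    by rewrite exprSr rmorphM rmorphB rmorph1 rmorphM.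
  ring.
have q0 : 0 <= 1 - rho * rho / M.
  rewrite subr_ge0 ler_pdivrMr // mul1r; apply: le_trans M1.
  have : rho * rho <= 4^-1 * 4^-1 by apply: ler_pM => //; exact: ltW.
  move/le_trans; apply.
  have h4 : (4^-1 : R) <= 1 by rewrite invf_le1 ?ltr0n ?ler1n.
  have h4' : (0 : R) <= 4^-1 by rewrite invr_ge0 ler0n.
  exact: mulr_ile1.
have q1 : 1 - rho * rho / M < 1 by rewrite ltrBlDr ltrDl divr_gt0 // mulr_gt0.
have eb0 : 0 < 2^-1 / (Mu + 1) by rewrite divr_gt0 ?invr_gt0 ?ltr0n // ltr_wpDl.
have [n0 hn0] := pow_small _ _ q0 q1 eb0.
have [a [Ha [ca aE]]] := Aj n0.
apply: (neumann hchi Ha ca) => x.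
have w0 : 0 <= 1 - gr x / M by rewrite subr_ge0 ler_pdivrMr // mul1r ltW.
have w1 : 1 - gr x / M <= 1 by rewrite lerBlDr lerDl divr_ge0 // ltW.
rewrite aE nrM nrR ger0_norm ?exprn_ge0 //.
case: (ltP (gr x) (rho * rho)) => hx.
  rewrite -[X in _ <= X]mulr1; apply: ler_pM; [exact: nr_ge0|exact: exprn_ge0|exact: small|exact: exprn_ile1].
have hw : 1 - gr x / M <= 1 - rho * rho / M by rewrite lerD2l lerN2 ler_pM2r // invr_gt0.
have : (1 - gr x / M) ^+ n0 <= 2^-1 / (Mu + 1).
  apply: le_trans hn0; apply: lerXn2r => //; rewrite nnegrE //.
move=> hp; apply: le_trans (ler_pM (nr_ge0 _) (exprn_ge0 _ w0) (bu x) hp) _.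
rewrite mulrCA ger_pMr ?invr_gt0 ?ltr0n //.
by rewrite ler_pdivrMr ?ltr_wpDl // mul1r lerDl.
Qed.
End D.

Section T.
Context {R : realType}.
Local Notation C := (Cplx R).
Variables (X B : topologicalType) (r : X -> B).

Definition ev (x : X) : {ptws (X -> C) -> C} :=
  fun phi => if pselect (in_H r phi) then phi x else 0.

Lemma evE x phi : in_H r phi -> ev x phi = phi x.
Proof. by rewrite /ev; case: pselect. Qed.

Lemma ev_char x (phi0 : X -> C) : in_H r phi0 -> phi0 x != 0 -> is_character r (ev x).
Proof.
move=> H0 nz; split.
- by move=> phi nH; rewrite /ev; case: pselect.
- by move=> phi psi Hp Hq; rewrite !evE //; exact: H_add.
- by move=> a phi Hp; rewrite !evE //; exact: H_scale.
- by move=> phi psi Hp Hq; rewrite !evE //; exact: H_mul.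
- by exists phi0; split => //; rewrite evE.
Qed.

Lemma dense_ev (chi : betaB R r) (U : set (betaB R r)) : nbhs chi U ->
  exists chi' x, U chi' /\ is_i chi' x.
Proof.
rewrite nbhsE; move=> [W [oO Ochi] OU].
case: oO => A oA eA.
have nA : nbhs (set_val chi) A.
  apply: open_nbhs_nbhs; split => //; by rewrite -eA in Ochi.
pose I := (nat * (nat -> X -> C) * R)%type.
pose D : set I := [set i | 0 < i.2].
pose E (i : I) : set {ptws (X -> C) -> C} := [set psi | (exists (chi' : betaB R r) x,
    set_val chi' = psi /\ is_i chi' x) /\
    forall k, (k < i.1.1)%N -> nr (psi (i.1.2 k) - set_val chi (i.1.2 k)) < i.2].
have FF : Filter (filter_from D E).
  apply: filter_from_filter.
    by exists (0%N, (fun _ _ => 0), 1); rewrite /D /= ltr01.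
  move=> [[n1 s1] e1] [[n2 s2] e2]; rewrite /D /= => e10 e20.
  exists ((n1 + n2)%N, (fun k => if (k < n1)%N then s1 k else s2 (k - n1)%N), Num.min e1 e2).
    by rewrite /D /= lt_min e10 e20.
  move=> psi [H1 H2]; split; split => // k kn.
  - have := H2 k (ltn_addr _ kn); rewrite /= kn lt_min => /andP [].
    by [].
  - have := H2 (n1 + k)%N; rewrite /= ltn_add2l.
    have -> : (n1 + k < n1)%N = false by rewrite ltnNge leq_addr.
    rewrite addKn.
    by move=> /(_ kn); rewrite lt_min => /andP [].
have hchi : is_character r (set_val chi) by have := set_valP chi.
have ne i : D i -> exists psi, E i psi.
  move: i => [[n s] e]; rewrite /D /= => e0.
  pose s' k := if pselect (in_H r (s k)) then s k else (fun _ => 0 : C).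
  have Hs' k : (k < n)%N -> in_H r (s' k).
    by move=> _; rewrite /s'; destruct (pselect (in_H r (s k))) => //; exact: H_0.
  have [x [[phi0 [H0 nz]] hx]] := @density R X B r (set_val chi) hchi n s' e e0 Hs'.
  exists (ev x); split.
    exists (SigSub (mem_set (@ev_char x phi0 H0 nz)) : betaB R r), x; split => //.
    by move=> phi Hp; exact: evE.
  move=> k kn /=; have := hx k kn; rewrite /s' /ev; case: pselect => // nH _.
  by rewrite (chi_out hchi nH) subrr nr0.
have cv : filter_from D E --> set_val chi.
  have P := @pointwise_cvgP {ptws X -> C} C (filter_from D E) (set_val chi) FF.
  apply: (proj2 P) => t N /nbhs_ballP [e' e'0 be].
  have ne' : 0 < nr e' by rewrite -(@ltcR R) -normE gtr0_norm.
  exists (1%N, (fun _ => t), nr e'); first by rewrite /D.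
  move=> psi [_ hp]; apply: be; rewrite /ball /= distrC.
  have := hp 0%N isT; move=> /= h.
  by rewrite -[e'](gtr0_norm e'0) !normE ltcR.
have [i Di EiA] := cv A nA.
have [psi [[chi' [x [vchi isi]]] hp]] := ne i Di.
exists chi', x; split => //; apply: OU; rewrite -eA /= vchi; apply: EiA.
by split => //; exists chi', x.
Qed.
End T.


End PropHelpers.
Import PropHelpers.

Theorem proposition4p10 (R : realType) (B X X' : topologicalType)
    (r : X -> B) (r' : X' -> B) (f : X -> X') :
  locally_compact [set: B] -> hausdorff_space B ->
  continuous r ->
  hausdorff_space X' -> proper_map r' ->
  continuous f -> r' \o f = r ->
  forall f' : betaB R r -> X',
    continuous f' -> (forall chi x, is_i chi x -> f' chi = f x) ->
  forall betaBr : betaB R r -> B,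
    continuous betaBr -> (forall chi x, is_i chi x -> betaBr chi = r x) ->
  r' \o f' = betaBr.
Proof.
move=> _ hB _ _ [cr' _] _ rf f' cf' hf' bB cbB hbB.
apply/funext => chi; apply: hB => P Q hP hQ.
have n1 : nbhs chi ((r' \o f') @^-1` P).
  by apply: (continuous_comp (cf' chi) (cr' (f' chi))).
have n2 : nbhs chi (bB @^-1` Q) by apply: (cbB chi).
have [chi' [x [[h1 h2] hi]]] := @dense_ev R X B r chi _ (filterI n1 n2).
exists (r x); split.
  by move: h1; rewrite /= (hf' _ _ hi) -rf.
by move: h2; rewrite /= (hbB _ _ hi).
Qed.
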